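(* Let $\Lambda$ be a Kähler group, let $\rho:\Lambda\to\prod_{\alpha\in\mathfrak{U}}T_\alpha$ be its universal homomorphism, and let $\rho_{\mathrm{tf}}$ be its torsion-free universal homomorphism. Then $\ker(\rho)$ and $\ker(\rho_{\mathrm{tf}})$ are characteristic subgroups of $\Lambda$.
   Context: A Kähler group is the fundamental group of a compact Kähler manifold. For a Kähler group $\Lambda$ there is a (possibly empty) finite collection of cocompact Fuchsian groups $\{T_\alpha\}_{\alpha\in\mathfrak{U}}$ and a homomorphism $\rho:\Lambda\to T=\prod_{\alpha\in\mathfrak{U}}T_\alpha$ (the universal homomorphism; the $T_\alpha$ are its direct factors) such that: (1) for each $\alpha$, with projection $p_\alpha:T\to T_\alpha$, the map $p_\alpha\circ\rho$ is surjective; (2) every surjective homomorphism from $\Lambda$ onto a cocompact Fuchsian group factors through some $p_\alpha\circ\rho$; (3) a surjective homomorphism $\sigma:\Lambda\to T'$ onto a cocompact Fuchsian group has finitely generated kernel if and only if there exist $\alpha\in\mathfrak{U}$ and an isomorphism $\psi:T_\alpha\to T'$ with $\sigma=\psi\circ p_\alpha\circ\rho$. (If $\mathfrak{U}=\varnothing$, $\rho$ is the trivial map to the trivial group.) Let $\mathfrak{U}_{\mathrm{tf}}\subseteq\mathfrak{U}$ be the set of $\alpha$ for which $T_\alpha$ is torsion-free (i.e., a surface group of genus $\ge2$); the torsion-free universal homomorphism is $\rho_{\mathrm{tf}}:\Lambda\to\prod_{\alpha\in\mathfrak{U}_{\mathrm{tf}}}T_\alpha$, the composition of $\rho$ with the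 projection onto these factors. *)

(* Defs.v *)
From Stdlib Require Import Reals List.
Open Scope R_scope.

Record Group := {
  carrier :> Type;
  gmul : carrier -> carrier -> carrier;
  gone : carrier;
  ginv : carrier -> carrier;
  gmulA : forall x y z, gmul x (gmul y z) = gmul (gmul x y) z;
  gmul1l : forall x, gmul gone x = x;
  gmul1r : forall x, gmul x gone = x;
  gmulVl : forall x, gmul (ginv x) x = gone;
  gmulVr : forall x, gmul x (ginv x) = gone
}.

Arguments gmul {g}.
Arguments gone {g}.
Arguments ginv {g}.

Definition is_hom (G H : Group) (f : G -> H) : Prop :=
  forall x y, f (gmul x y) = gmul (f x) (f y).

Definition surjective {A B : Type} (f : A -> B) : Prop :=
  forall b, exists a, f a = b.

Definition bijective {A B : Type} (f : A -> B) : Prop :=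
  (forall x y, f x = f y -> x = y) /\ surjective f.

Definition is_iso (G H : Group) (f : G -> H) : Prop :=
  is_hom G H f /\ bijective f.

Definition kernel (G H : Group) (f : G -> H) : G -> Prop :=
  fun x => f x = gone.

Inductive gen (G : Group) (l : list G) : G -> Prop :=
  | gen_in : forall x, In x l -> gen G l x
  | gen_one : gen G l gone
  | gen_mul : forall x y, gen G l x -> gen G l y -> gen G l (gmul x y)
  | gen_inv : forall x, gen G l x -> gen G l (ginv x).

Definition fin_gen_subgroup (G : Group) (K : G -> Prop) : Prop :=
  exists l : list G, (forall x, In x l -> K x) /\ (forall x, K x <-> gen G l x).

Fixpoint gpow (G : Group) (x : G) (n : nat) : G :=
  match n with O => gone | S m => gmul x (gpow G x m) end.

Definition torsion_free (G : Group) : Prop :=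
  forall (x : G) (n : nat), (n >= 1)%nat -> gpow G x n = gone -> x = gone.

Definition characteristic (G : Group) (K : G -> Prop) : Prop :=
  forall phi : G -> G, is_iso G G phi -> forall x, K x <-> K (phi x).

Section Prod.
Variable I : Type.
Variable T : I -> Group.
Definition pmul (x y : forall i, T i) : forall i, T i := fun i => gmul (x i) (y i).
Definition pone : forall i, T i := fun i => gone.
Definition pinv (x : forall i, T i) : forall i, T i := fun i => ginv (x i).
End Prod.

From Stdlib Require Import FunctionalExtensionality.

Definition prodGroup (I : Type) (T : I -> Group) : Group.
Proof.
  refine {| carrier := forall i, T i; gmul := pmul I T; gone := pone I T;
            ginv := pinv I T |};
  intros; unfold pmul, pone, pinv; apply functional_extensionality_dep; intro i.
  - apply gmulA. - apply gmul1l. - apply gmul1r. - apply gmulVl. - apply gmulVr.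
Defined.

Definition proj (I : Type) (T : I -> Group) (a : I) : prodGroup I T -> T a :=
  fun x => x a.

Record mat2 := Mat2 { m11 : R; m12 : R; m21 : R; m22 : R }.

Definition mmul (A B : mat2) : mat2 :=
  Mat2 (m11 A * m11 B + m12 A * m21 B) (m11 A * m12 B + m12 A * m22 B)
       (m21 A * m11 B + m22 A * m21 B) (m21 A * m12 B + m22 A * m22 B).
Definition mopp (A : mat2) : mat2 := Mat2 (- m11 A) (- m12 A) (- m21 A) (- m22 A).
Definition mid : mat2 := Mat2 1 0 0 1.
Definition mdet (A : mat2) : R := m11 A * m22 A - m12 A * m21 A.
Definition mdist (A B : mat2) : R :=
  Rmax (Rmax (Rabs (m11 A - m11 B)) (Rabs (m12 A - m12 B)))
       (Rmax (Rabs (m21 A - m21 B)) (Rabs (m22 A - m22 B))).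
Definition mnorm (A : mat2) : R :=
  Rmax (Rmax (Rabs (m11 A)) (Rabs (m12 A))) (Rmax (Rabs (m21 A)) (Rabs (m22 A))).

(* f : G -> SL(2,R) induces an injective homomorphism G -> PSL(2,R) = SL(2,R)/{±1} *)
Definition psl_embedding (G : Group) (f : G -> mat2) : Prop :=
  (forall x, mdet (f x) = 1) /\
  (forall x y, f (gmul x y) = mmul (f x) (f y) \/ f (gmul x y) = mopp (mmul (f x) (f y))) /\
  (forall x, (f x = mid \/ f x = mopp mid) -> x = gone).

(* image is discrete in PSL(2,R): the identity class {±I} is isolated *)
Definition psl_discrete (G : Group) (f : G -> mat2) : Prop :=
  exists eps, 0 < eps /\
    forall x, x <> gone -> eps <= mdist (f x) mid /\ eps <= mdist (f x) (mopp mid).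

(* image is cocompact: PSL(2,R) = Gamma K for a compact (equivalently, bounded,
   since SL(2,R) is closed in M_2(R)) subset K of SL(2,R) *)
Definition psl_cocompact (G : Group) (f : G -> mat2) : Prop :=
  exists B, forall M : mat2, mdet M = 1 ->
    exists (x : G) (K : mat2), mdet K = 1 /\ mnorm K <= B /\
      (M = mmul (f x) K \/ M = mopp (mmul (f x) K)).

Definition cocompact_fuchsian (G : Group) : Prop :=
  exists f : G -> mat2, psl_embedding G f /\ psl_discrete G f /\ psl_cocompact G f.

Definition finite_type (I : Type) : Prop := exists l : list I, forall i, In i l.

Definition universal_hom (L : Group) (I : Type) (T : I -> Group)
    (rho : L -> prodGroup I T) : Prop :=
  finite_type I /\
  (forall a, cocompact_fuchsian (T a)) /\
  is_hom L (prodGroup I T) rho /\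
  (* (1) *)
  (forall a, surjective (fun x => proj I T a (rho x))) /\
  (* (2) *)
  (forall (T' : Group) (sigma : L -> T'), cocompact_fuchsian T' ->
     is_hom L T' sigma -> surjective sigma ->
     exists a (theta : T a -> T'), is_hom (T a) T' theta /\
       forall x, sigma x = theta (proj I T a (rho x))) /\
  (* (3) *)
  (forall (T' : Group) (sigma : L -> T'), cocompact_fuchsian T' ->
     is_hom L T' sigma -> surjective sigma ->
     (fin_gen_subgroup L (kernel L T' sigma) <->
      exists a (psi : T a -> T'), is_iso (T a) T' psi /\
        forall x, sigma x = psi (proj I T a (rho x)))).

Definition tf_index (I : Type) (T : I -> Group) : Type :=
  { a : I | torsion_free (T a) }.

Definition tf_family (I : Type) (T : I -> Group) : tf_index I T -> Group :=
  fun a => T (proj1_sig a).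

Definition rho_tf (L : Group) (I : Type) (T : I -> Group) (rho : L -> prodGroup I T) :
  L -> prodGroup (tf_index I T) (tf_family I T) :=
  fun x => fun a => rho x (proj1_sig a).

(* Main.v *)
Require Import Defs.
From Stdlib Require Import List FunctionalExtensionality IndefiniteDescription.

Lemma hom_one (G H : Group) (f : G -> H) : is_hom G H f -> f gone = gone.
Proof.
  intro Hf. pose proof (Hf gone gone) as e. rewrite gmul1l in e.
  transitivity (gmul (gmul (ginv (f gone)) (f gone)) (f gone)).
  - rewrite gmulVl, gmul1l. reflexivity.
  - rewrite <- gmulA, <- e. apply gmulVl.
Qed.

Lemma hom_inv (G H : Group) (f : G -> H) : is_hom G H f ->
  forall x, f (ginv x) = ginv (f x).
Proof.
  intros Hf x.
  assert (e : gmul (f (ginv x)) (f x) = gone).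
  { rewrite <- Hf, gmulVl. apply hom_one; exact Hf. }
  rewrite <- (gmul1r _ (f (ginv x))). rewrite <- (gmulVr _ (f x)).
  rewrite gmulA, e, gmul1l. reflexivity.
Qed.

Lemma hom_pow (G H : Group) (f : G -> H) : is_hom G H f ->
  forall x n, f (gpow G x n) = gpow H (f x) n.
Proof.
  intros Hf x n; induction n; simpl.
  - apply hom_one; exact Hf.
  - rewrite Hf, IHn; reflexivity.
Qed.

Lemma iso_tf (G H : Group) (psi : G -> H) : is_iso G H psi ->
  torsion_free H -> torsion_free G.
Proof.
  intros [Hh [Hi _]] Ht x n Hn Hp.
  apply Hi. rewrite (hom_one _ _ _ Hh).
  apply (Ht _ n Hn). rewrite <- (hom_pow _ _ _ Hh), Hp. apply hom_one; exact Hh.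
Qed.

Lemma iso_inverse (G : Group) (phi : G -> G) : is_iso G G phi ->
  exists psi : G -> G, forall x, phi (psi x) = x.
Proof.
  intros [_ [_ Hs]].
  exists (fun y => proj1_sig (constructive_indefinite_description _ (Hs y))).
  intro y. destruct (constructive_indefinite_description _ (Hs y)); assumption.
Qed.

Lemma gen_closed (G : Group) (l : list G) (K : G -> Prop) :
  (forall x, K x <-> gen G l x) ->
  K gone /\ (forall x y, K x -> K y -> K (gmul x y)) /\ (forall x, K x -> K (ginv x)).
Proof.
  intro HK. split; [|split].
  - apply HK, gen_one.
  - intros x y Hx Hy. apply HK, gen_mul; apply HK; assumption.
  - intros x Hx. apply HK, gen_inv; apply HK; assumption.
Qed.

Lemma preimage_list (G : Group) (phi : G -> G) : surjective phi ->
  forall l : list G, exists l' : list G,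
    (forall y, In y l -> exists x, In x l' /\ phi x = y) /\
    (forall x, In x l' -> In (phi x) l).
Proof.
  intros Hs l; induction l as [|a l IH].
  - exists nil; split; intros; simpl in *; contradiction.
  - destruct IH as [l' [H1 H2]]. destruct (Hs a) as [z Hz].
    exists (z :: l'); split.
    + intros y [Hy|Hy].
      * exists z; split; [left; reflexivity| congruence].
      * destruct (H1 y Hy) as [x [Hx1 Hx2]]. exists x; split; [right; exact Hx1|exact Hx2].
    + intros x [Hx|Hx].
      * subst; left; reflexivity.
      * right; apply H2; exact Hx.
Qed.

Lemma fg_transfer (G : Group) (phi : G -> G) (K : G -> Prop) : is_iso G G phi ->
  fin_gen_subgroup G K -> fin_gen_subgroup G (fun y => K (phi y)).
Proof.
  intros [Hh [Hi Hs]] [l [Hl HK]].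
  destruct (gen_closed G l K HK) as [K1 [KM KI]].
  destruct (preimage_list G phi Hs l) as [l' [H1 H2]].
  exists l'; split.
  - intros x Hx. apply Hl, H2, Hx.
  - intro x; split.
    + intro Hx. apply HK in Hx.
      remember (phi x) as y eqn:Ey. revert x Ey.
      induction Hx as [y Hy| |y1 y2 _ IH1 _ IH2|y1 _ IH1]; intros x Ey.
      * destruct (H1 y Hy) as [x' [Hx'1 Hx'2]].
        assert (x = x') by (apply Hi; congruence). subst; apply gen_in; exact Hx'1.
      * assert (x = gone) by (apply Hi; rewrite (hom_one _ _ _ Hh); symmetry; exact Ey).
        subst; apply gen_one.
      * destruct (Hs y1) as [x1 E1]. destruct (Hs y2) as [x2 E2].
        assert (x = gmul x1 x2) by (apply Hi; rewrite Hh; congruence).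
        subst; apply gen_mul; [apply IH1|apply IH2]; congruence.
      * destruct (Hs y1) as [x1 E1].
        assert (x = ginv x1) by (apply Hi; rewrite (hom_inv _ _ _ Hh); congruence).
        subst; apply gen_inv; apply IH1; congruence.
    + intro Hx. induction Hx as [x Hx| |x y _ IH1 _ IH2|x _ IH1].
      * apply Hl, H2, Hx.
      * rewrite (hom_one _ _ _ Hh); exact K1.
      * rewrite Hh; apply KM; assumption.
      * rewrite (hom_inv _ _ _ Hh); apply KI; assumption.
Qed.

Lemma id_iso (G : Group) : is_iso G G (fun x => x).
Proof.
  split; [intros x y; reflexivity| split; [intros x y e; exact e| intro b; exists b; reflexivity]].
Qed.

Section Main.
Variables (L : Group) (I : Type) (T : I -> Group) (rho : L -> prodGroup I T).
Hypothesis U : universal_hom L I T rho.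

Lemma comp_hom (phi : L -> L) (a : I) : is_hom L L phi ->
  is_hom L (T a) (fun y => rho (phi y) a).
Proof.
  destruct U as [_ [_ [Hr _]]]. intros Hp x y. rewrite Hp, Hr. reflexivity.
Qed.

Lemma comp_surj (phi : L -> L) (a : I) : is_iso L L phi ->
  surjective (fun y => rho (phi y) a).
Proof.
  destruct U as [_ [_ [_ [H1 _]]]]. intros [_ [_ Hs]] b.
  destruct (H1 a b) as [y Hy]. destruct (Hs y) as [z Hz].
  exists z. rewrite Hz. exact Hy.
Qed.

Lemma fwd1 (phi : L -> L) : is_iso L L phi ->
  forall x, kernel L (prodGroup I T) rho x -> kernel L (prodGroup I T) rho (phi x).
Proof.
  intros Hp x Hx. unfold kernel in *. simpl in *.
  apply functional_extensionality_dep; intro a.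
  destruct U as [_ [Hc [_ [_ [H2 _]]]]].
  destruct (H2 (T a) (fun y => rho (phi y) a) (Hc a) (comp_hom phi a (proj1 Hp))
              (comp_surj phi a Hp)) as [b [theta [Ht Heq]]].
  rewrite Heq. unfold proj. rewrite Hx. unfold pone. apply hom_one; exact Ht.
Qed.

Lemma fwd2 (phi : L -> L) : is_iso L L phi ->
  forall x, kernel L _ (rho_tf L I T rho) x -> kernel L _ (rho_tf L I T rho) (phi x).
Proof.
  intros Hp x Hx. unfold kernel, rho_tf in *. simpl in *.
  apply functional_extensionality_dep; intros [a Ha]. simpl.
  unfold pone.
  destruct U as [_ [Hc [_ [_ [_ H3]]]]].
  assert (Hfg : fin_gen_subgroup L (kernel L (T a) (fun y => rho y a))).
  { apply (H3 (T a) (fun y => rho y a) (Hc a)).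
    - apply (comp_hom (fun y => y)). exact (proj1 (id_iso L)).
    - apply (comp_surj (fun y => y)). exact (id_iso L).
    - exists a, (fun z => z). split; [apply id_iso| intro; reflexivity]. }
  pose proof (fg_transfer L phi _ Hp Hfg) as Hfg'.
  destruct (proj1 (H3 (T a) (fun y => rho (phi y) a) (Hc a) (comp_hom phi a (proj1 Hp))
              (comp_surj phi a Hp)) Hfg') as [b [psi [Hpsi Heq]]].
  rewrite Heq. unfold proj.
  assert (Hb : torsion_free (T b)) by (exact (iso_tf _ _ psi Hpsi Ha)).
  pose proof (equal_f_dep Hx (exist _ b Hb)) as E. simpl in E.
  rewrite E. apply hom_one; exact (proj1 Hpsi).
Qed.

End Main.

Lemma char_of_fwd (G : Group) (K : G -> Prop) :
  (forall phi, is_iso G G phi -> forall x, K x -> K (phi x)) -> characteristic G K.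
Proof.
  intros Hf phi Hp x. split; [apply Hf; exact Hp|].
  intro Hx.
  destruct (iso_inverse G phi Hp) as [psi Hpsi].
  assert (Hiso : is_iso G G psi).
  { destruct Hp as [Hh [Hi Hs]]. split; [|split].
    - intros a b. apply Hi. rewrite Hh, !Hpsi. reflexivity.
    - intros a b e. rewrite <- (Hpsi a), <- (Hpsi b), e. reflexivity.
    - intro b. exists (phi b). apply Hi. apply Hpsi. }
  pose proof (Hf psi Hiso _ Hx) as H.
  assert (E : psi (phi x) = x) by (apply (proj1 (proj2 Hp)); apply Hpsi).
  rewrite E in H; exact H.
Qed.

Theorem lemma2p2 (L : Group) (I : Type) (T : I -> Group) (rho : L -> prodGroup I T) :
  universal_hom L I T rho ->
  characteristic L (kernel L (prodGroup I T) rho) /\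
  characteristic L (kernel L (prodGroup (tf_index I T) (tf_family I T)) (rho_tf L I T rho)).
Proof.
  intro U. split; apply char_of_fwd; intros phi Hp.
  - apply (fwd1 L I T rho U phi Hp).
  - apply (fwd2 L I T rho U phi Hp).
Qed.
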